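(* Let $k, m, \nu, d$ be positive integers and let $t \in \mathbb{R}$. Suppose $\tilde{\bm{c}} = \tilde{\bm{c}}(\bm{\theta}) \in \mathbb{R}^k$, $\tilde{\bm{A}} = \tilde{\bm{A}}(\bm{\theta}) \in \mathbb{R}^{m\times k}$ and $\tilde{\bm{b}} = \tilde{\bm{b}}(\bm{\theta}) \in \mathbb{R}^m$ are such that every entry of each of them is a real polynomial of degree at most $d$ in $\nu$ real variables $\bm{\theta} \in \mathbb{R}^\nu$. Assume that for every $\bm{\theta} \in \mathbb{R}^\nu$ the linear program $\max\{\tilde{\bm{c}}^\top \bm{y} : \tilde{\bm{A}}\bm{y} \le \tilde{\bm{b}},\ \bm{y}\in\mathbb{R}^k\}$ is feasible and bounded. Then there exist at most $\binom{m+2k}{2k}(m+2k+2)$ real polynomials $p_1,\dots,p_L$ in $\bm{\theta}$, each of degree at most $(2k+1)d$, with the following property: for any $\bm{\theta}, \bm{\theta}' \in \mathbb{R}^\nu$ such that $\operatorname{sign}(p_j(\bm{\theta})) = \operatorname{sign}(p_j(\bm{\theta}'))$ for all $j = 1,\dots,L$ (where the sign takes values in $\{<0, =0, >0\}$), the statement $\max\{\tilde{\bm{c}}(\bm{\theta})^\top \bm{y} : \tilde{\bm{A}}(\bm{\theta})\bm{y} \le \tilde{\bm{b}}(\bm{\theta})\} \ge t$ holds if and only if $\max\{\tilde{\bm{c}}(\bm{\theta}')^\top \bm{y} : \tilde{\bm{A}}(\bm{\theta}')\bm{y} \le \tilde{\bm{b}}(\bm{\theta}')\} \ge t$ holds.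
   Context: Vector inequalities are entrywise. *)

(* Defs.v *)
From HB Require Import structures.
From mathcomp Require Import all_boot all_order all_algebra.
From mathcomp Require Import classical_sets reals.
From mathcomp Require Import mpoly.
Set Implicit Arguments. Unset Strict Implicit. Unset Printing Implicit Defensive.
Import Order.TTheory GRing.Theory Num.Theory.
Local Open Scope ring_scope.

Section LP.
Variables (R : realType) (nu m k : nat).

Definition lp_feasible (A : 'I_m -> 'I_k -> {mpoly R[nu]}) (b : 'I_m -> {mpoly R[nu]})
  (theta : 'I_nu -> R) (y : 'I_k -> R) : Prop :=
  forall i : 'I_m, \sum_(j < k) (A i j).@[theta] * y j <= (b i).@[theta].

Definition lp_obj (c : 'I_k -> {mpoly R[nu]}) (theta : 'I_nu -> R) (y : 'I_k -> R) : R :=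
  \sum_(j < k) (c j).@[theta] * y j.

Definition lp_value c A b (theta : 'I_nu -> R) : R :=
  sup [set lp_obj c theta y | y in [set y | lp_feasible A b theta y]]%classic.

Definition lp_feasible_bounded c A b (theta : 'I_nu -> R) : Prop :=
  (exists y, lp_feasible A b theta y) /\
  (exists M : R, forall y, lp_feasible A b theta y -> lp_obj c theta y <= M).
End LP.

(* Main.v *)
Require Import Defs.
From HB Require Import structures.
From mathcomp Require Import all_boot all_order all_algebra.
From mathcomp Require Import classical_sets reals.
From mathcomp Require Import mpoly.
From mathcomp Require Import ring lra zify.
From Stdlib Require Import Classical FunctionalExtensionality.
From mathcomp Require Import perm.
Set Implicit Arguments. Unset Strict Implicit. Unset Printing Implicit Defensive.
Import Order.TTheory GRing.Theory Num.Theory.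
Local Open Scope ring_scope.
Section AbsLP.
Variables (R : realFieldType) (n N : nat) (P : 'M[R]_(N,n)) (q : 'cV[R]_N) (w : 'rV[R]_n).
Implicit Types (x z : 'cV[R]_n).
Definition feas (x : 'cV_n) := forall i, (P *m x) i 0 <= q i 0.
Definition tight (x : 'cV_n) i := (P *m x) i 0 == q i 0.
Definition obj (x : 'cV_n) := (w *m x) 0 0.
Definition spans (x : 'cV_n) := forall z : 'cV_n, (forall i, tight x i -> (P *m z) i 0 = 0) -> z = 0.

Lemma entP x a z i : (P *m (x + a *: z)) i 0 = (P *m x) i 0 + a * (P *m z) i 0.
Proof. by rewrite mulmxDr -scalemxAr !mxE. Qed.
Lemma entO x a z : obj (x + a *: z) = obj x + a * obj z.
Proof. by rewrite /obj mulmxDr -scalemxAr !mxE. Qed.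
Lemma entPN z i : (P *m - z) i 0 = - (P *m z) i 0.
Proof. by rewrite mulmxN mxE. Qed.
Lemma entON z : obj (- z) = - obj z.
Proof. by rewrite /obj mulmxN mxE. Qed.

Hypothesis linefree : forall z, P *m z = 0 -> z = 0.
Hypothesis bnd : exists M, forall x, feas x -> obj x <= M.

Lemma unb z x : feas x -> 0 < obj z -> exists i, 0 < (P *m z) i 0.
Proof.
move=> fx wz.
case: (boolP [exists i, 0 < (P *m z) i 0]) => [/existsP [i hi]|/existsPn hn]; first by exists i.
exfalso; case: bnd => M HM.
pose a := (`|M - obj x| + 1) / obj z.
have a0 : 0 <= a by apply: divr_ge0 => //; [apply: addr_ge0 | apply: ltW].
have : feas (x + a *: z).
  move=> i; rewrite entP.
  have : (P *m z) i 0 <= 0 by rewrite leNgt hn.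
  move=> h; have := fx i; have : a * (P *m z) i 0 <= 0 by apply: mulr_ge0_le0.
  lra.
move/HM; rewrite entO /a divfK ?gt_eqF //.
have := ler_norm (M - obj x); lra.
Qed.

Lemma dir x z : feas x -> z != 0 -> (forall i, tight x i -> (P *m z) i 0 = 0) ->
  exists z', (forall i, tight x i -> (P *m z') i 0 = 0) /\ 0 <= obj z' /\
     exists i, 0 < (P *m z') i 0.
Proof.
move=> fx nz hz.
case: (ltgtP 0 (obj z)) => h.
- by exists z; split => //; split; [apply: ltW | apply: (unb fx)].
- exists (- z); split; first by move=> i /hz; rewrite entPN => ->; rewrite oppr0.
  rewrite entON; split; first by rewrite oppr_ge0 ltW.
  by apply: (unb fx); rewrite entON oppr_gt0.
- have [i hi] : exists i, (P *m z) i 0 != 0.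
    apply: NNPP => hn; apply: (negP nz); apply/eqP; apply: linefree.
    apply/matrixP => i j; rewrite (ord1 j) [in RHS]mxE.
    by apply/eqP; apply: NNPP => hh; apply: hn; exists i; apply/negP.
  case: (ltgtP 0 ((P *m z) i 0)) hi => // hi _.
  + by exists z; split => //; split; [rewrite -h | exists i].
  + exists (- z); split; first by move=> j /hz; rewrite entPN => ->; rewrite oppr0.
    rewrite entON -h oppr0; split => //; exists i; rewrite entPN oppr_gt0 //.
Qed.

Lemma step x : feas x -> ~ spans x -> exists x', [/\ feas x', obj x <= obj x',
  (forall i, tight x i -> tight x' i) & exists i, tight x' i /\ ~~ tight x i].
Proof.
move=> fx ns.
have [z [hz nz]] : exists z, (forall i, tight x i -> (P *m z) i 0 = 0) /\ z != 0.
  apply: NNPP => hn; apply: ns => z hz; apply/eqP; apply: NNPP => nz; apply: hn; by exists z; split => //; apply/negP.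
have [z' [hz' [oz [i1 hi1]]]] := dir fx nz hz.
pose I := [pred i | 0 < (P *m z') i 0].
pose ratio i := (q i 0 - (P *m x) i 0) / (P *m z') i 0.
have I1 : I i1 by [].
case: (@arg_minP _ _ _ i1 I ratio I1) => i0 Ii0 hmin.
have nt0 : ~~ tight x i0.
  by apply/negP => /hz' h0; move: Ii0; rewrite /I /= h0 ltxx.
pose a := ratio i0.
have a0 : 0 <= a.
  by apply: divr_ge0; [have := fx i0; lra | apply: ltW].
exists (x + a *: z'); split.
- move=> j; rewrite entP.
  case: (boolP (I j)) => Ij.
  + have := hmin j Ij; rewrite /= -/a /ratio ler_pdivlMr //; lra.
  + have : (P *m z') j 0 <= 0 by rewrite leNgt.
    move=> h; have := fx j; have : a * (P *m z') j 0 <= 0 by apply: mulr_ge0_le0.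
    lra.
- rewrite entO; have : 0 <= a * obj z' by apply: mulr_ge0. lra.
- by move=> i ti; rewrite /tight entP (hz' _ ti) mulr0 addr0.
- exists i0; split => //.
  rewrite /tight entP /a /ratio divfK; last by rewrite gt_eqF.
  by rewrite addrC subrK.
Qed.

Lemma vertex_exists x : feas x -> exists x', [/\ feas x', obj x <= obj x' & spans x'].
Proof.
have [k] := ubnP #|[set i | ~~ tight x i]|.
elim: k x => // k IH x hk fx.
case: (classic (spans x)) => sp; first by exists x; split.
have [x' [fx' ox tt [i0 [ti0 nti0]]]] := step fx sp.
have : (#|[set i | ~~ tight x' i]| < k)%N.
  suff hp : (#|[set i | ~~ tight x' i]| < #|[set i | ~~ tight x i]|)%N.
    by apply: leq_trans hp _; rewrite -ltnS.
  apply: proper_card; apply/properP; split.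
    by apply/fintype.subsetP => i; rewrite !inE; apply: contra; apply: tt.
  by exists i0; rewrite !inE ?ti0.
move=> /IH /(_ fx') [x'' [fx'' ox' sp'']]; exists x''; split => //.
exact: le_trans ox'.
Qed.

Lemma rker_unit (M : 'M[R]_n) : (forall z : 'cV_n, M *m z = 0 -> z = 0) -> M \in unitmx.
Proof.
move=> h; rewrite -unitmx_tr -row_free_unit; apply: inj_row_free => v hv.
have : M *m v^T = 0 by rewrite -(trmxK (M *m v^T)) trmx_mul trmxK hv trmx0.
by move/h => /(congr1 trmx); rewrite trmxK trmx0.
Qed.

Lemma select x : spans x -> exists t : n.-tuple 'I_N,
  [/\ sorted ltn (map val t), rowsub (tnth t) P \in unitmx & forall j, tight x (tnth t j)].
Proof.
move=> sp.
pose D : 'M[R]_(N,n) := \matrix_(i, j) (if tight x i then P i j else 0).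
have hD : row_full D.
  rewrite /row_full -mxrank_tr; change (row_free D^T); apply: inj_row_free => v hv.
  have e : D *m v^T = 0 by rewrite -(trmxK (D *m v^T)) trmx_mul trmxK hv trmx0.
  suff : v^T = 0 by move/(congr1 trmx); rewrite trmxK trmx0.
  apply: sp => i ti.
  transitivity ((D *m v^T) i 0); last by rewrite e mxE.
  rewrite !mxE; apply: eq_bigr => j _; rewrite !mxE ti.
  done.
pose f := fullrankfun hD.
have uf := fullrowsub_unit hD.
have tf : forall j, tight x (f j).
  move=> j; case: (boolP (tight x (f j))) => // ntj.
  have : row j (rowsub f D) = 0 by apply/rowP => l; rewrite !mxE (negbTE ntj).
  rewrite rowE => h.
  have := mulmxK uf (delta_mx (0 : 'I_1) j); rewrite h mul0mx => /matrixP /(_ 0 j).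
  by rewrite !mxE !eqxx /= => /eqP; rewrite eq_sym oner_eq0.
have eqf : rowsub f D = rowsub f P by apply/matrixP => i l; rewrite !mxE tf.
pose s := sort (fun a b : 'I_N => (val a <= val b)%N) (map f (enum 'I_n)).
have ss : size s == n by rewrite size_sort size_map size_enum_ord.
pose t := Tuple ss.
have memt : forall i, (i \in t) = (i \in map f (enum 'I_n)) by move=> i; rewrite mem_sort.
exists t; split.
- rewrite ltn_sorted_uniq_leq; apply/andP; split.
  + rewrite map_inj_uniq; last exact: val_inj.
    rewrite sort_uniq map_inj_uniq ?enum_uniq //; exact: fullrankfun_inj.
  + rewrite sorted_map; apply: sort_sorted => a b; exact: leq_total.
- apply: rker_unit => z hz.
  have hz' : forall j, (P *m z) (f j) 0 = 0.
    move=> j; have : f j \in t by rewrite memt map_f ?mem_enum.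
    case/tnthP => j' ->.
    have := congr1 (fun M : 'cV[R]_n => M j' 0) hz; rewrite [RHS]mxE => <-.
    rewrite !mxE; apply: eq_bigr => l _; rewrite !mxE //.
  rewrite -(mulKmx uf z) eqf.
  have -> : rowsub f P *m z = 0.
    apply/matrixP => j l; rewrite (ord1 l) [RHS]mxE -(hz' j) !mxE.
    apply: eq_bigr => i _; rewrite !mxE //.
  by rewrite mulmx0.
- move=> j; have : tnth t j \in map f (enum 'I_n) by rewrite -memt mem_tnth.
  by case/mapP => j' _ ->; exact: tf.
Qed.

Definition vtx (t : n.-tuple 'I_N) := invmx (rowsub (tnth t) P) *m rowsub (tnth t) q.

Lemma best_vertex x : feas x -> exists t : n.-tuple 'I_N,
  [/\ sorted ltn (map val t), rowsub (tnth t) P \in unitmx, feas (vtx t) & obj x <= obj (vtx t)].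
Proof.
move=> fx; have [x' [fx' ox sp]] := vertex_exists fx.
have [t [st ut tt]] := select sp.
exists t; suff -> : vtx t = x' by [].
rewrite /vtx -[x'](mulKmx ut); congr (_ *m _); apply/matrixP => j l.
rewrite (ord1 l) [LHS]mxE /= -(eqP (tt j)) !mxE; apply: eq_bigr => i _; rewrite !mxE //.
Qed.
End AbsLP.
Section Deg.
Variables (R : realType) (nu : nat).
Local Notation P := {mpoly R[nu]}.

Lemma msize_mulle (p q : P) a b : (msize p <= a.+1)%N -> (msize q <= b.+1)%N ->
  (msize (p * q) <= (a + b).+1)%N.
Proof.
have [->|p0] := eqVneq p 0; first by rewrite mul0r msize0.
have [->|q0] := eqVneq q 0; first by rewrite mulr0 msize0.
move=> hp hq; rewrite msizeM // -subn1 leq_subLR; apply: leq_trans (leq_add hp hq) _.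
by rewrite addSn addnS add1n.
Qed.

Lemma msize_sumle (I : finType) (F : I -> P) D : (forall i, msize (F i) <= D)%N ->
  (msize (\sum_i F i) <= D)%N.
Proof.
move=> h; apply: (big_ind (fun p : P => msize p <= D)%N) => //; first by rewrite msize0.
move=> x y hx hy; apply: leq_trans (msizeD_le _ _) _; by rewrite geq_max hx hy.
Qed.

Lemma msize_prodle n (F : 'I_n -> P) d : (forall i, msize (F i) <= d.+1)%N ->
  (msize (\prod_i F i) <= (n * d).+1)%N.
Proof.
elim: n F => [|n IH] F h; first by rewrite big_ord0 msize1.
rewrite big_ord_recr /=.
have := msize_mulle (IH (fun i => F (widen_ord (leqnSn n) i)) (fun i => h _)) (h ord_max).
by rewrite mulSn addnC.
Qed.

Lemma msize_sign (b : nat) : (msize ((-1) ^+ b : P) <= 0.+1)%N.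
Proof. by rewrite -signr_odd; case: (odd b); rewrite ?expr1 ?expr0 ?msizeN msize1. Qed.

Lemma msize_det n (M : 'M[P]_n) d : (forall i j, msize (M i j) <= d.+1)%N ->
  (msize (\det M) <= (n * d).+1)%N.
Proof.
move=> h; rewrite /determinant; apply: msize_sumle => s.
have := msize_mulle (msize_sign _) (msize_prodle (fun i => h i (s i))).
by rewrite add0n.
Qed.

Lemma msize_adj n (M : 'M[P]_n) d : (forall i j, msize (M i j) <= d.+1)%N ->
  forall i j, (msize (\adj M i j) <= (n.-1 * d).+1)%N.
Proof.
move=> h i j; rewrite mxE /cofactor.
have := msize_mulle (msize_sign (j + i)) (msize_det (M := row' j (col' i M)) (d := d) _).
rewrite add0n; apply => a b; rewrite !mxE; exact: h.
Qed.

Lemma msize_mulmx m n p (A : 'M[P]_(m, n)) (B : 'M[P]_(n, p)) a b :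
  (forall i j, msize (A i j) <= a.+1)%N -> (forall i j, msize (B i j) <= b.+1)%N ->
  forall i j, (msize ((A *m B) i j) <= (a + b).+1)%N.
Proof.
move=> hA hB i j; rewrite mxE; apply: msize_sumle => l; exact: msize_mulle.
Qed.
End Deg.

Section Main.
Variables (R : realType) (k m nu : nat) (t : R).
Variables (c : 'I_k -> {mpoly R[nu]}) (A : 'I_m -> 'I_k -> {mpoly R[nu]})
  (b : 'I_m -> {mpoly R[nu]}).
Local Notation Pl := {mpoly R[nu]}.
Local Notation n := (k + k)%N.
Local Notation N := (m + (k + k))%N.

Definition Am : 'M[Pl]_(m, k) := \matrix_(i, j) A i j.
Definition Pp : 'M[Pl]_(N, n) := col_mx (row_mx Am (- Am)) (- 1%:M).
Definition qp : 'cV[Pl]_N := col_mx (\col_i b i) 0.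
Definition cr : 'rV[Pl]_k := \row_j c j.
Definition wp : 'rV[Pl]_n := row_mx cr (- cr).

Definition Pth th := map_mx (meval th) Pp.
Definition qth th := map_mx (meval th) qp.
Definition wth th := map_mx (meval th) wp.

Lemma Pth_mul th (x : 'cV[R]_n) :
  Pth th *m x = col_mx (map_mx (meval th) Am *m (usubmx x - dsubmx x)) (- x).
Proof.
rewrite /Pth /Pp map_col_mx map_row_mx !map_mxN map_mx1 mul_col_mx mulNmx mul1mx.
congr col_mx; rewrite -{1}(vsubmxK x) mul_row_col mulNmx mulmxBr //.
Qed.

Lemma wth_mul th (x : 'cV[R]_n) :
  wth th *m x = map_mx (meval th) cr *m (usubmx x - dsubmx x).
Proof. by rewrite /wth /wp map_row_mx map_mxN -{1}(vsubmxK x) mul_row_col mulNmx mulmxBr. Qed.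

Definition ysplit (x : 'cV[R]_n) : 'I_k -> R := fun j => (usubmx x - dsubmx x) j 0.
Definition xsplit (y : 'I_k -> R) : 'cV[R]_n :=
  col_mx (\col_j (y j + `|y j|)) (\col_j `|y j|).

Lemma xsplitK y : ysplit (xsplit y) = y.
Proof. by apply: functional_extensionality => j; rewrite /ysplit /xsplit col_mxKu col_mxKd !mxE addrK. Qed.

Lemma F1 th x : feas (Pth th) (qth th) x -> lp_feasible A b th (ysplit x).
Proof.
move=> fx i; move: (fx (lshift _ i)).
rewrite Pth_mul col_mxEu /qth /qp map_col_mx col_mxEu !mxE /ysplit.
congr (_ <= _); apply: eq_bigr => j _; rewrite !mxE //.
Qed.

Lemma F2 th y : lp_feasible A b th y -> feas (Pth th) (qth th) (xsplit y).
Proof.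
move=> fy i; rewrite -(splitK i); case: (split i) => [i'|j']; rewrite [unsplit _]/=.
- rewrite Pth_mul col_mxEu /qth /qp map_col_mx col_mxEu /xsplit col_mxKu col_mxKd.
  move: (fy i'); rewrite !mxE; congr (_ <= _); apply: eq_bigr => j _; rewrite !mxE addrK //.
- rewrite Pth_mul col_mxEd /qth /qp map_col_mx col_mxEd map_mx0 !mxE oppr_le0.
  case: (split j') => a; rewrite !mxE.
  + by have := ler_norm (- y a); rewrite normrN; lra.
  + exact: normr_ge0.
Qed.

Lemma O1 th x : obj (wth th) x = lp_obj c th (ysplit x).
Proof.
rewrite /obj wth_mul /lp_obj /ysplit !mxE; apply: eq_bigr => j _; rewrite !mxE //.
Qed.

Lemma linefree th (z : 'cV[R]_n) : Pth th *m z = 0 -> z = 0.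
Proof. by rewrite Pth_mul => /eqP; rewrite col_mx_eq0 oppr_eq0 => /andP[_ /eqP]. Qed.


Definition T := [set tt : n.-tuple 'I_N | sorted ltn (map val tt)].
Definition goodP th (tt : n.-tuple 'I_N) :=
  [/\ rowsub (tnth tt) (Pth th) \in unitmx,
      feas (Pth th) (qth th) (vtx (Pth th) (qth th) tt)
    & t <= obj (wth th) (vtx (Pth th) (qth th) tt)].

Lemma value_iff th : lp_feasible_bounded c A b th ->
  (t <= lp_value c A b th <-> exists2 tt, tt \in T & goodP th tt).
Proof.
case=> [[y0 fy0] [M hM]].
set E := [set lp_obj c th y | y in [set y | lp_feasible A b th y]]%classic.
have ubE : has_ubound E by exists M => _ [y fy <-]; exact: hM.
have neE : (E !=set0)%classic by exists (lp_obj c th y0); exists y0.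
have bnd : exists M0, forall x, feas (Pth th) (qth th) x -> obj (wth th) x <= M0.
  by exists M => x fx; rewrite O1; apply: hM; exact: F1.
split.
- move=> ht; apply: NNPP => hno.
  pose F (tt : n.-tuple 'I_N) := if (rowsub (tnth tt) (Pth th) \in unitmx) &&
     [forall i, (Pth th *m vtx (Pth th) (qth th) tt) i 0 <= qth th i 0]
     then obj (wth th) (vtx (Pth th) (qth th) tt) else t - 1.
  have Flt : forall tt, tt \in T -> F tt < t.
    move=> tt hT; rewrite /F; case: ifP => [/andP [u /forallP fe]|_]; last lra.
    rewrite ltNge; apply/negP => hle; apply: hno; exists tt => //; split => //.
  pose mu := \big[Num.max/(t - 1)]_(tt in T) F tt.
  have mult : mu < t by apply: bigmax_lt => //; lra.
  have : lp_value c A b th <= mu.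
    apply: ge_sup => // _ [y fy <-].
    have [tt [st ut fv ov]] := best_vertex (linefree (th := th)) bnd (F2 fy).
    apply: (le_trans _ (_ : F tt <= mu)); last by apply: le_bigmax_cond; rewrite inE.
    rewrite /F ut /=.
    have -> : [forall i, (Pth th *m vtx (Pth th) (qth th) tt) i 0 <= qth th i 0] = true.
      by apply/forallP.
    by rewrite -[in X in X <= _](xsplitK y) -O1.
  lra.
- case=> tt _ [ut fv ov]; apply: (le_trans ov); rewrite O1; apply: ub_le_sup => //.
  by exists (ysplit (vtx (Pth th) (qth th) tt)) => //; exact: F1.
Qed.

Definition Mt (tt : n.-tuple 'I_N) := rowsub (tnth tt) Pp.
Definition dl tt := \det (Mt tt).
Definition uu tt : 'cV[Pl]_n := \adj (Mt tt) *m rowsub (tnth tt) qp.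
Definition gp tt i := (Pp *m uu tt) i 0 - dl tt * qp i 0.
Definition hp tt := (wp *m uu tt) 0 0 - dl tt * t%:MP.
Definition polys tt := dl tt :: hp tt :: [seq gp tt i | i <- enum 'I_N].
Definition C th tt := [/\ (dl tt).@[th] != 0,
   forall i, Num.sg (gp tt i).@[th] * Num.sg (dl tt).@[th] <= 0
 & 0 <= Num.sg (hp tt).@[th] * Num.sg (dl tt).@[th]].

Lemma evE th p q (M : 'M[Pl]_(p, q)) i j : (M i j).@[th] = (map_mx (meval th) M) i j.
Proof. by rewrite mxE. Qed.

Lemma ev_dl th tt : (dl tt).@[th] = \det (rowsub (tnth tt) (Pth th)).
Proof. by rewrite /dl -det_map_mx /Mt map_mxsub. Qed.

Lemma ev_uu th tt : map_mx (meval th) (uu tt) =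
  \adj (rowsub (tnth tt) (Pth th)) *m rowsub (tnth tt) (qth th).
Proof. by rewrite /uu map_mxM map_mx_adj !map_mxsub. Qed.

Lemma ev_gp th tt i : (gp tt i).@[th] =
  (Pth th *m (\adj (rowsub (tnth tt) (Pth th)) *m rowsub (tnth tt) (qth th))) i 0
  - (dl tt).@[th] * qth th i 0.
Proof. by rewrite /gp mevalB mevalM !evE map_mxM ev_uu. Qed.

Lemma ev_hp th tt : (hp tt).@[th] =
  (wth th *m (\adj (rowsub (tnth tt) (Pth th)) *m rowsub (tnth tt) (qth th))) 0 0
  - (dl tt).@[th] * t.
Proof. by rewrite /hp mevalB mevalM mevalC !evE map_mxM ev_uu. Qed.

Lemma sgkey1 (d a z : R) : d != 0 -> (Num.sg (a - d * z) * Num.sg d <= 0) = (d^-1 * a <= z).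
Proof.
move=> d0; rewrite -sgrM.
have -> : (a - d * z) * d = (d * d) * (d^-1 * a - z) by field.
have dd : 0 < d * d by rewrite -expr2 exprn_even_gt0 //= d0 orbT.
by rewrite sgrM gtr0_sg // mul1r sgr_le0 subr_le0.
Qed.

Lemma sgkey2 (d a z : R) : d != 0 -> (0 <= Num.sg (a - d * z) * Num.sg d) = (z <= d^-1 * a).
Proof.
move=> d0; rewrite -sgrM.
have -> : (a - d * z) * d = (d * d) * (d^-1 * a - z) by field.
have dd : 0 < d * d by rewrite -expr2 exprn_even_gt0 //= d0 orbT.
by rewrite sgrM gtr0_sg // mul1r sgr_ge0 subr_ge0.
Qed.

Lemma vtxE th tt : rowsub (tnth tt) (Pth th) \in unitmx ->
  vtx (Pth th) (qth th) tt = (\det (rowsub (tnth tt) (Pth th)))^-1 *: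
     (\adj (rowsub (tnth tt) (Pth th)) *m rowsub (tnth tt) (qth th)).
Proof. by move=> ut; rewrite /vtx /invmx ut scalemxAl. Qed.

Lemma mulscE p q r (M : 'M[R]_(p, q)) (a : R) (u : 'M[R]_(q, r)) i j :
  (M *m (a *: u)) i j = a * (M *m u) i j.
Proof. by rewrite -scalemxAr mxE. Qed.

Lemma good_iff th tt : goodP th tt <-> C th tt.
Proof.
rewrite /goodP /C ev_dl unitmxE unitfE; split.
- case=> d0 fv ov; split => //.
  + move=> i; rewrite ev_gp ev_dl sgkey1 //; move: (fv i).
    by rewrite vtxE ?unitmxE ?unitfE // mulscE.
  + rewrite ev_hp ev_dl sgkey2 //; move: ov.
    by rewrite /obj vtxE ?unitmxE ?unitfE // mulscE.
- case=> d0 hg hh; split => //.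
  + move=> i; move: (hg i); rewrite ev_gp ev_dl sgkey1 //.
    by rewrite vtxE ?unitmxE ?unitfE // mulscE.
  + move: hh; rewrite ev_hp ev_dl sgkey2 //.
    by rewrite /obj vtxE ?unitmxE ?unitfE // mulscE.
Qed.

Lemma C_inv th th' tt : (forall p, p \in polys tt -> Num.sg p.@[th] = Num.sg p.@[th']) ->
  C th tt -> C th' tt.
Proof.
move=> hs [d0 hg hh].
have hd : Num.sg (dl tt).@[th] = Num.sg (dl tt).@[th'] by apply: hs; rewrite inE eqxx.
split.
- by rewrite -sgr_eq0 -hd sgr_eq0.
- move=> i; rewrite -hd -hs //; rewrite !inE; apply/orP; right; apply/orP; right.
  by apply: map_f; rewrite mem_enum.
- rewrite -hd -hs //; rewrite !inE eqxx; apply/orP; right; apply/orP; left => //.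
Qed.

Lemma Pp_deg d : (forall i j, msize (A i j) <= d.+1)%N ->
  forall i j, (msize (Pp i j) <= d.+1)%N.
Proof.
move=> hA i j; rewrite /Pp mxE; case: (split i) => i'; rewrite !mxE.
- case: (split j) => j'; rewrite !mxE ?msizeN; exact: hA.
- rewrite msizeN; case: (_ == _); rewrite ?mulr1n ?mulr0n ?msize1 ?msize0 //.
Qed.

Lemma qp_deg d : (forall i, msize (b i) <= d.+1)%N ->
  forall i j, (msize (qp i j) <= d.+1)%N.
Proof.
move=> hb i j; rewrite /qp mxE; case: (split i) => i'; rewrite !mxE ?msize0 //.
Qed.

Lemma wp_deg d : (forall j, msize (c j) <= d.+1)%N ->
  forall i j, (msize (wp i j) <= d.+1)%N.
Proof.
move=> hc i j; rewrite /wp mxE; case: (split j) => j'; rewrite !mxE ?msizeN //.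
Qed.

Lemma msizeB_le (p q : Pl) D : (msize p <= D)%N -> (msize q <= D)%N -> (msize (p - q) <= D)%N.
Proof.
move=> hp hq; apply: leq_trans (msizeD_le _ _) _; by rewrite msizeN geq_max hp hq.
Qed.

Lemma polys_deg d tt : (forall i j, msize (A i j) <= d.+1)%N ->
  (forall i, msize (b i) <= d.+1)%N -> (forall j, msize (c j) <= d.+1)%N ->
  forall p, p \in polys tt ->
  (msize p <= maxn (n * d).+1 (maxn (d + ((n.-1 * d) + d)).+1 (n * d + d).+1))%N.
Proof.
move=> hA hb hc.
have hM : forall i j, (msize (Mt tt i j) <= d.+1)%N by move=> i j; rewrite mxE; apply: Pp_deg.
have hq : forall i j, (msize (rowsub (tnth tt) qp i j) <= d.+1)%N.
  by move=> i j; rewrite mxE; apply: qp_deg.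
have hdl : (msize (dl tt) <= (n * d).+1)%N by apply: msize_det.
have hu : forall i j, (msize (uu tt i j) <= (n.-1 * d + d).+1)%N.
  by apply: msize_mulmx => //; apply: msize_adj.
move=> p; rewrite !inE => /orP [/eqP -> | /orP [/eqP -> | /mapP [i _ ->]]].
- by rewrite leq_max hdl.
- apply: msizeB_le.
  + apply: leq_trans (msize_mulmx (wp_deg hc) hu 0 0) _.
    by rewrite leq_max leq_max leqnn orbT.
  + apply: leq_trans (msize_mulle (b := 0) hdl _) _.
      by rewrite msizeC; case: (_ != _).
    by rewrite addn0 leq_max leqnn.
- apply: msizeB_le.
  + apply: leq_trans (msize_mulmx (Pp_deg hA) hu i 0) _.
    by rewrite leq_max leq_max leqnn orbT.
  + apply: leq_trans (msize_mulle hdl (qp_deg hb i 0)) _.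
    by rewrite leq_max leq_max leqnn !orbT.
Qed.
End Main.

Lemma arith k d : (0 < k)%N ->
  (maxn ((k + k) * d).+1 (maxn (d + (((k + k).-1 * d) + d)).+1 ((k + k) * d + d).+1)
    <= (2 * k + 1) * d + 1)%N.
Proof.
case: k => // k _; rewrite addSn /= !geq_max.
apply/andP; split; last (apply/andP; split); nia.
Qed.


Unset Implicit Arguments.
Theorem lemma1 (R : realType) (k m nu d : nat) (t : R)
  (hk : (0 < k)%N) (hm : (0 < m)%N) (hnu : (0 < nu)%N) (hd : (0 < d)%N)
  (c : 'I_k -> {mpoly R[nu]}) (A : 'I_m -> 'I_k -> {mpoly R[nu]})
  (b : 'I_m -> {mpoly R[nu]})
  (hc : forall j, (msize (c j) <= d.+1)%N)
  (hA : forall i j, (msize (A i j) <= d.+1)%N)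
  (hb : forall i, (msize (b i) <= d.+1)%N)
  (hfb : forall theta : 'I_nu -> R, lp_feasible_bounded c A b theta) :
  exists ps : seq {mpoly R[nu]},
    [/\ (size ps <= 'C(m + 2 * k, 2 * k) * (m + 2 * k + 2))%N,
        (forall p, p \in ps -> (msize p <= (2 * k + 1) * d + 1)%N) &
        (forall theta theta' : 'I_nu -> R,
           (forall p, p \in ps -> Num.sg p.@[theta] = Num.sg p.@[theta']) ->
           (t <= lp_value c A b theta <-> t <= lp_value c A b theta'))].
Proof.
exists (flatten [seq polys t c A b tu | tu <- enum (T k m)]); split.
- rewrite size_flatten.
  have -> : shape [seq polys t c A b tu | tu <- enum (T k m)] =
            nseq #|T k m| (m + (k + k)).+2.
    rewrite /shape -map_comp cardE; elim: (enum (T k m)) => //= x s ->.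
    by rewrite size_map size_enum_ord.
  by rewrite sumn_nseq /T card_ltn_sorted_tuples mul2n -addnn mulnC addn2.
- move=> p /flattenP [s /mapP [tu _ ->]] hp.
  apply: leq_trans (polys_deg hA hb hc hp) _; exact: arith.
- move=> th th' hs; rewrite (value_iff t (hfb th)) (value_iff t (hfb th')).
  have key : forall tu, tu \in T k m ->
      (forall p, p \in polys t c A b tu -> Num.sg p.@[th] = Num.sg p.@[th']).
    move=> tu hT p hp; apply: hs; apply/flattenP; exists (polys t c A b tu) => //.
    by apply: map_f; rewrite mem_enum.
  split => -[tu hT hg]; exists tu => //; apply/good_iff; move/good_iff: hg;
    apply: C_inv => p hp; first [exact: (key _ hT p hp) | exact/esym/(key _ hT p hp)].
Qed.
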